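(* Let $\mathbf c=\{c_n\}_{n=1}^{\infty}$ be a complex $O$-regularly varying quasimonotone sequence with $\lim_{n\to\infty}c_n=0$. Then there exist a natural number $N_0$ and a constant $M>0$ such that $$\sum_{n=m}^{2m}|c_n-c_{n+1}|\le M\max_{m\le n<m+N_0}|c_n|\qquad\text{for all } m=1,2,\dots.$$
   Context: A sequence $\{R(n)\}$ is $O$-regularly varying if it is non-decreasing, positive, and $\limsup_{n\to\infty}R(2n)/R(n)<\infty$. For $\theta\in[0,\pi/2]$, $K(\theta)=\{z\in\mathbb C:|\arg z|\le\theta\}$. A complex sequence $\{c_n\}$ is $O$-regularly varying quasimonotone (in the complex sense) if for some $\theta_0\in[0,\pi/2)$ and some $O$-regularly varying sequence $\{R(n)\}$ one has $\frac{c_n}{R(n)}-\frac{c_{n+1}}{R(n+1)}\in K(\theta_0)$ for all $n$. *)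

(* Defs.v *)
From Stdlib Require Import Reals Lra Lia.
From Coquelicot Require Import Coquelicot.
Open Scope R_scope.

(* Sequences are indexed from 1; values at index 0 are irrelevant. *)

Definition O_regularly_varying (Rs : nat -> R) : Prop :=
  (forall n, (1 <= n)%nat -> Rs n <= Rs (S n)) /\
  (forall n, (1 <= n)%nat -> 0 < Rs n) /\
  (exists B N, forall n, (N <= n)%nat -> Rs (2 * n)%nat / Rs n <= B).

(* Sector K(theta) = { z : |arg z| <= theta }, with 0 included. *)
Definition sectorK (theta : R) (z : C) : Prop :=
  exists r phi, 0 <= r /\ Rabs phi <= theta /\
    z = (RtoC r * (RtoC (cos phi) + Ci * RtoC (sin phi)))%C.

Definition O_rv_quasimonotone (c : nat -> C) : Prop :=
  exists (theta0 : R) (Rs : nat -> R),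
    0 <= theta0 < PI / 2 /\ O_regularly_varying Rs /\
    forall n, (1 <= n)%nat ->
      sectorK theta0 (c n / RtoC (Rs n) - c (S n) / RtoC (Rs (S n)))%C.

Definition tends_to_zero (c : nat -> C) : Prop :=
  filterlim c eventually (locally (0 : C)).

Definition var_block (c : nat -> C) (m : nat) : R :=
  sum_n_m (fun n => Cmod (c n - c (S n))%C) m (2 * m).

Fixpoint max_from (c : nat -> C) (m k : nat) : R :=
  match k with
  | O => 0
  | S k' => Rmax (Cmod (c (m + k')%nat)) (max_from c m k')
  end.

(* Main.v *)
Require Import Defs.
From Stdlib Require Import Reals.
From Coquelicot Require Import Coquelicot.
From Stdlib Require Import Lra Lia.
Open Scope R_scope.

Lemma trig_aux (psi th : R) : 0 <= psi <= th -> th < PI / 2 ->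
  cos th * sin psi <= sin th * cos psi.
Proof.
  intros H1 H2.
  assert (0 <= sin (th - psi)) by (apply sin_ge_0; pose proof PI_RGT_0; lra).
  rewrite sin_minus in H. lra.
Qed.

Lemma sector_bound (th : R) (z : C) : 0 <= th < PI / 2 -> sectorK th z ->
  0 <= fst z /\ Rabs (snd z) <= (sin th / cos th) * fst z.
Proof.
  intros Hth [r [phi [Hr [Hphi Hz]]]]. subst z. simpl.
  pose proof PI_RGT_0.
  assert (Hc : 0 < cos th) by (apply cos_gt_0; lra).
  assert (Hphi' : - (PI/2) <= phi <= PI/2) by (apply Rabs_le_between in Hphi; lra).
  assert (Hcp : 0 <= cos phi) by (apply cos_ge_0; lra).
  assert (E1 : r * (cos phi + (0 * sin phi - 1 * 0)) - 0 * (0 + (0 * 0 + 1 * sin phi)) = r * cos phi) by ring.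
  assert (E2 : r * (0 + (0 * 0 + 1 * sin phi)) + 0 * (cos phi + (0 * sin phi - 1 * 0)) = r * sin phi) by ring.
  rewrite E1, E2. split. apply Rmult_le_pos; lra.
  assert (K : cos th * Rabs (sin phi) <= sin th * cos phi).
  { destruct (Rle_dec 0 phi) as [Hp|Hp].
    - rewrite Rabs_right. apply trig_aux; apply Rabs_le_between in Hphi; lra.
      apply Rle_ge, sin_ge_0; lra.
    - rewrite <- (Rabs_Ropp (sin phi)), <- sin_neg, <- (cos_neg phi).
      rewrite Rabs_right. apply trig_aux.
      rewrite Rabs_left in Hphi; lra. lra.
      apply Rle_ge, sin_ge_0; lra. }
  rewrite Rabs_mult, (Rabs_right r) by lra.
  apply (Rmult_le_reg_l (cos th)); [lra|].
  replace (cos th * (sin th / cos th * (r * cos phi))) with (r * (sin th * cos phi)) by (field; lra).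
  replace (cos th * (r * Rabs (sin phi))) with (r * (cos th * Rabs (sin phi))) by ring.
  apply Rmult_le_compat_l; lra.
Qed.

Lemma div_fst (z : C) (r : R) : r <> 0 -> fst (z / RtoC r)%C = fst z / r.
Proof. intros H. destruct z as [a b]. unfold Cdiv, Cinv, Cmult, RtoC; simpl. field. auto. Qed.
Lemma div_snd (z : C) (r : R) : r <> 0 -> snd (z / RtoC r)%C = snd z / r.
Proof. intros H. destruct z as [a b]. unfold Cdiv, Cinv, Cmult, RtoC; simpl. field. auto. Qed.

Lemma fst_minus (a b : C) : fst (a - b)%C = fst a - fst b.
Proof. destruct a, b; simpl; ring. Qed.
Lemma snd_minus (a b : C) : snd (a - b)%C = snd a - snd b.
Proof. destruct a, b; simpl; ring. Qed.

Lemma ball0_abs (x e : R) : ball 0 e x -> Rabs x < e.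
Proof.
intros B. unfold ball in B. simpl in B. unfold AbsRing_ball, abs, minus, plus, opp in B. simpl in B. rewrite Ropp_0, Rplus_0_r in B. exact B. Qed.

Lemma le_eps (a b : R) : (forall e, 0 < e -> a <= b + e) -> a <= b.
Proof.
  intros H. destruct (Rle_dec a b) as [h|h]; auto.
  specialize (H ((a - b)/2)). lra.
Qed.

Lemma mono (Rs : nat -> R) : (forall n, (1 <= n)%nat -> Rs n <= Rs (S n)) ->
  forall n j, (1 <= n)%nat -> Rs n <= Rs (n + j)%nat.
Proof.
  intros H n j Hn. induction j. rewrite Nat.add_0_r; lra.
  rewrite Nat.add_succ_r. specialize (H (n + j)%nat). assert (1 <= n + j)%nat by lia; specialize (H H0); lra.
Qed.

Lemma mono' (Rs : nat -> R) : (forall n, (1 <= n)%nat -> Rs n <= Rs (S n)) ->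
  forall n p, (1 <= n)%nat -> (n <= p)%nat -> Rs n <= Rs p.
Proof.
  intros H n p Hn Hp. replace p with (n + (p - n))%nat by lia. apply mono; auto.
Qed.

Lemma chain (ar ai : nat -> R) (q : R) :
  (forall n, (1 <= n)%nat -> ar (S n) <= ar n /\ Rabs (ai n - ai (S n)) <= q * (ar n - ar (S n))) ->
  forall n j, (1 <= n)%nat -> ar (n + j)%nat <= ar n /\ Rabs (ai n - ai (n + j)%nat) <= q * (ar n - ar (n + j)%nat).
Proof.
  intros H n j Hn. induction j.
  - rewrite Nat.add_0_r. unfold Rminus. rewrite Rplus_opp_r, Rabs_R0. lra.
  - rewrite Nat.add_succ_r. assert (1 <= n + j)%nat by lia.
    destruct (H _ H0) as [A1 A2]. destruct IHj as [B1 B2]. split. lra.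
    replace (ai n - ai (S (n + j))) with ((ai n - ai (n + j)%nat) + (ai (n+j)%nat - ai (S (n + j)))) by ring.
    eapply Rle_trans. apply Rabs_triang. lra.
Qed.

Lemma nonneg (ar ai : nat -> R) (q : R) : 0 <= q ->
  (forall n, (1 <= n)%nat -> ar (S n) <= ar n /\ Rabs (ai n - ai (S n)) <= q * (ar n - ar (S n))) ->
  (forall e, 0 < e -> exists N, forall p, (N <= p)%nat -> Rabs (ar p) < e /\ Rabs (ai p) < e) ->
  forall n, (1 <= n)%nat -> 0 <= ar n /\ Rabs (ai n) <= q * ar n.
Proof.
  intros Hq Hd Hl n Hn. split.
  - apply le_eps. intros e He. destruct (Hl e He) as [N HN].
    destruct (HN (n + N)%nat) as [A _]. lia.
    destruct (chain ar ai q Hd n N Hn) as [C _].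
    apply Rabs_def2 in A. lra.
  - apply le_eps. intros e He.
    destruct (Hl (e / (1 + q))) as [N HN]. apply Rdiv_lt_0_compat; lra.
    destruct (HN (n + N)%nat) as [A1 A2]. lia.
    destruct (chain ar ai q Hd n N Hn) as [C1 C2].
    replace (ai n) with ((ai n - ai (n + N)%nat) + ai (n + N)%nat) by ring.
    eapply Rle_trans. apply Rabs_triang.
    apply Rabs_def2 in A1.
    assert (q * (- ar (n + N)%nat) <= q * (e / (1 + q))) by (apply Rmult_le_compat_l; lra).
    assert (e / (1 + q) + q * (e / (1 + q)) = e) by (field; lra).
    lra.
Qed.

Lemma Cmod_le_sum (z : C) : Cmod z <= Rabs (fst z) + Rabs (snd z).
Proof.
  unfold Cmod. rewrite <- (sqrt_Rsqr (Rabs (fst z) + Rabs (snd z))).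
  apply sqrt_le_1_alt. unfold Rsqr.
  assert (fst z ^ 2 = Rabs (fst z) * Rabs (fst z)) by (rewrite <- Rabs_mult; rewrite Rabs_right; [ring| nra]).
  assert (snd z ^ 2 = Rabs (snd z) * Rabs (snd z)) by (rewrite <- Rabs_mult; rewrite Rabs_right; [ring| nra]).
  pose proof (Rabs_pos (fst z)); pose proof (Rabs_pos (snd z)). nra.
  pose proof (Rabs_pos (fst z)); pose proof (Rabs_pos (snd z)). lra.
Qed.

Lemma term_bound (Rn Rn1 an an1 bn bn1 am q : R) :
  0 < Rn -> Rn <= Rn1 -> 0 <= q -> 0 <= an1 -> an1 <= an -> an1 <= am ->
  Rabs (bn - bn1) <= q * (an - an1) -> Rabs bn1 <= q * an1 ->
  Rabs (Rn * an - Rn1 * an1) + Rabs (Rn * bn - Rn1 * bn1) <=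
  (1 + q) * (Rn * (an - an1) + (Rn1 - Rn) * am).
Proof.
  intros H1 H2 H3 H4 H5 H6 H7 H8.
  replace (Rn * an - Rn1 * an1) with (Rn * (an - an1) + (Rn - Rn1) * an1) by ring.
  replace (Rn * bn - Rn1 * bn1) with (Rn * (bn - bn1) + (Rn - Rn1) * bn1) by ring.
  pose proof (Rabs_triang (Rn * (an - an1)) ((Rn - Rn1) * an1)).
  pose proof (Rabs_triang (Rn * (bn - bn1)) ((Rn - Rn1) * bn1)).
  rewrite !Rabs_mult in *.
  rewrite (Rabs_right Rn) in * by lra.
  rewrite (Rabs_left1 (Rn - Rn1)) in * by lra.
  rewrite (Rabs_right (an - an1)) in * by lra.
  rewrite (Rabs_right an1) in * by lra.
  assert (Rn * Rabs (bn - bn1) <= Rn * (q * (an - an1))) by (apply Rmult_le_compat_l; lra).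
  assert (- (Rn - Rn1) * Rabs bn1 <= - (Rn - Rn1) * (q * an1)) by (apply Rmult_le_compat_l; lra).
  assert (- (Rn - Rn1) * an1 <= - (Rn - Rn1) * am) by (apply Rmult_le_compat_l; lra).
  assert (0 <= q * (- (Rn - Rn1) * (am - an1))) by (apply Rmult_le_pos; [lra| apply Rmult_le_pos; lra]).
  nra.
Qed.

Lemma sum_bound (f Rs ar : nat -> R) (L : R) (m : nat) : 0 <= L ->
  (forall n, (m <= n)%nat -> f n <= L * (Rs n * (ar n - ar (S n)) + (Rs (S n) - Rs n) * ar m)) ->
  (forall n, (m <= n)%nat -> Rs n <= Rs (S n)) ->
  (forall n, (m <= n)%nat -> ar n <= ar m) ->
  forall j, sum_n_m f m (m + j) <= L * (Rs (m + j)%nat * (ar m - ar (S (m + j))) + (Rs (S (m + j)) - Rs m) * ar m).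
Proof.
  intros HL Hf HR Ha j. induction j.
  - rewrite Nat.add_0_r, sum_n_n. apply Hf. lia.
  - rewrite Nat.add_succ_r, sum_n_Sm by lia. change plus with Rplus.
    assert (h1 := Hf (S (m + j)) ltac:(lia)).
    assert (h2 := HR (m + j)%nat ltac:(lia)).
    assert (h3 := Ha (S (m + j)) ltac:(lia)).
    assert (Rs (m + j)%nat * (ar m - ar (S (m + j))) <= Rs (S (m + j)) * (ar m - ar (S (m + j))))
      by (apply Rmult_le_compat_r; lra).
    assert (Lm : forall a b, a <= b -> L * a <= L * b) by (intros; apply Rmult_le_compat_l; lra).
    eapply Rle_trans. apply Rplus_le_compat. apply IHj. apply h1.
    rewrite <- Rmult_plus_distr_l. apply Lm. lra.
Qed.

Lemma Kbound (Rs : nat -> R) : O_regularly_varying Rs ->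
  exists K, 0 < K /\ forall m, (1 <= m)%nat -> Rs (S (2 * m)) <= K * Rs m.
Proof.
  intros [H1 [H2 [B [N HB]]]].
  set (N' := Nat.max N 1).
  assert (HB' : forall n, (N' <= n)%nat -> Rs (2 * n)%nat <= B * Rs n).
  { intros n Hn. assert (h := HB n ltac:(unfold N' in *; lia)).
    assert (0 < Rs n) by (apply H2; unfold N' in *; lia).
    apply (Rmult_le_compat_r (Rs n)) in h; [|lra].
    unfold Rdiv in h. rewrite Rmult_assoc, Rinv_l in h; lra. }
  assert (P1 : 0 < Rs 1%nat) by (apply H2; lia).
  assert (PB : 0 <= B).
  { assert (h := HB' N' ltac:(lia)). assert (0 < Rs N') by (apply H2; unfold N'; lia).
    assert (0 < Rs (2 * N')%nat) by (apply H2; unfold N'; lia).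
    destruct (Rle_dec 0 B); auto. nra. }
  assert (P2 : 0 < Rs (S (2 * N'))) by (apply H2; lia).
  exists (B * B + Rs (S (2 * N')) / Rs 1%nat). split.
  { assert (0 < Rs (S (2 * N')) / Rs 1%nat) by (apply Rdiv_lt_0_compat; lra). nra. }
  intros m Hm. assert (Pm : 0 < Rs m) by (apply H2; lia).
  assert (0 <= Rs (S (2 * N')) / Rs 1%nat * Rs m) by (apply Rmult_le_pos; [apply Rlt_le, Rdiv_lt_0_compat|]; lra).
  assert (0 <= B * B * Rs m) by (apply Rmult_le_pos; nra).
  destruct (Compare_dec.le_lt_dec N' m) as [Hl|Hl].
  - assert (a1 := HB' (S m) ltac:(lia)).
    assert (a2 := HB' m Hl).
    assert (a3 := mono' Rs H1 (S (2 * m)) (2 * S m) ltac:(lia) ltac:(lia)).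
    assert (a4 := mono' Rs H1 (S m) (2 * m) ltac:(lia) ltac:(lia)).
    assert (B * Rs (S m) <= B * (B * Rs m)) by (apply Rmult_le_compat_l; lra).
    nra.
  - assert (a1 := mono' Rs H1 (S (2 * m)) (S (2 * N')) ltac:(lia) ltac:(lia)).
    assert (a2 := mono' Rs H1 1 m ltac:(lia) Hm).
    assert (Rs (S (2 * N')) / Rs 1%nat * Rs 1%nat <= Rs (S (2 * N')) / Rs 1%nat * Rs m)
      by (apply Rmult_le_compat_l; [apply Rlt_le, Rdiv_lt_0_compat|]; lra).
    replace (Rs (S (2 * N')) / Rs 1%nat * Rs 1%nat) with (Rs (S (2 * N'))) in H3 by (field; lra).
    nra.
Qed.

Theorem mainTheorem5 (c : nat -> C) :
  O_rv_quasimonotone c -> tends_to_zero c ->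
  exists (N0 : nat) (M : R), (1 <= N0)%nat /\ 0 < M /\
    forall m : nat, (1 <= m)%nat ->
      var_block c m <= M * max_from c m N0.
Proof.
  intros [th [Rs [Hth [HRV Hd]]]] Hlim.
  destruct (Kbound Rs HRV) as [K [HK HKb]].
  destruct HRV as [HR1 [HR2 _]].
  pose proof PI_RGT_0.
  assert (Hc : 0 < cos th) by (apply cos_gt_0; lra).
  assert (Hs : 0 <= sin th) by (apply sin_ge_0; lra).
  set (q := sin th / cos th).
  assert (Hq : 0 <= q) by (apply Rle_mult_inv_pos; lra).
  set (ar := fun n => fst (c n) / Rs n).
  set (ai := fun n => snd (c n) / Rs n).
  assert (Hd' : forall n, (1 <= n)%nat -> ar (S n) <= ar n /\ Rabs (ai n - ai (S n)) <= q * (ar n - ar (S n))).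
  { intros n Hn. destruct (sector_bound th _ Hth (Hd n Hn)) as [A1 A2].
    assert (Rs n <> 0) by (specialize (HR2 n Hn); lra).
    assert (Rs (S n) <> 0) by (specialize (HR2 (S n) ltac:(lia)); lra).
    rewrite fst_minus, !div_fst in A1 by auto.
    rewrite snd_minus, fst_minus, !div_snd, !div_fst in A2 by auto.
    unfold ar, ai. split; [lra|].
    unfold q. exact A2. }
  assert (Hl : forall e, 0 < e -> exists N, forall p, (N <= p)%nat -> Rabs (ar p) < e /\ Rabs (ai p) < e).
  { intros e He. assert (P1 : 0 < Rs 1%nat) by (apply HR2; lia).
    assert (Hpos : 0 < e * Rs 1%nat) by (apply Rmult_lt_0_compat; lra).
    destruct (proj1 (filterlim_locally c (RtoC 0)) Hlim (mkposreal _ Hpos)) as [N HN].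
    exists (Nat.max N 1). intros p Hp.
    destruct (HN p ltac:(lia)) as [B1 B2]. simpl in B1, B2.
    assert (Pp : 0 < Rs p) by (apply HR2; lia).
    assert (Mp := mono' Rs HR1 1 p ltac:(lia) ltac:(lia)).
    unfold ar, ai. unfold Rdiv. rewrite !Rabs_mult, !(Rabs_right (/ Rs p)) by (apply Rle_ge, Rlt_le, Rinv_0_lt_compat; lra).
    apply ball0_abs in B1. apply ball0_abs in B2.
    assert (e * Rs 1%nat <= e * Rs p) by (apply Rmult_le_compat_l; lra).
    split; apply (Rmult_lt_reg_r (Rs p)); try lra;
    rewrite Rmult_assoc, Rinv_l; lra. }
  assert (Hnn := nonneg ar ai q Hq Hd' Hl).
  exists 1%nat, (2 * (1 + q) * K + 1). split; [lia|]. split.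
  { assert (0 <= 2 * (1 + q) * K) by (apply Rmult_le_pos; lra). lra. }
  intros m Hm. unfold var_block. simpl max_from. rewrite Nat.add_0_r.
  assert (Pm : 0 < Rs m) by (apply HR2; lia).
  assert (Ham := Hnn m Hm).
  assert (Hdec : forall n, (m <= n)%nat -> ar n <= ar m).
  { intros n Hn. replace n with (m + (n - m))%nat by lia. apply (chain ar ai q Hd' m _ Hm). }
  assert (Hterm : forall n, (m <= n)%nat -> Cmod (c n - c (S n))%C <=
      (1 + q) * (Rs n * (ar n - ar (S n)) + (Rs (S n) - Rs n) * ar m)).
  { intros n Hn.
    assert (Pn : 0 < Rs n) by (apply HR2; lia).
    assert (PSn : 0 < Rs (S n)) by (apply HR2; lia).
    eapply Rle_trans. apply Cmod_le_sum. rewrite fst_minus, snd_minus.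
    replace (fst (c n)) with (Rs n * ar n) by (unfold ar; field; lra).
    replace (fst (c (S n))) with (Rs (S n) * ar (S n)) by (unfold ar; field; lra).
    replace (snd (c n)) with (Rs n * ai n) by (unfold ai; field; lra).
    replace (snd (c (S n))) with (Rs (S n) * ai (S n)) by (unfold ai; field; lra).
    destruct (Hd' n ltac:(lia)) as [D1 D2].
    destruct (Hnn (S n) ltac:(lia)) as [E1 E2].
    apply term_bound; auto; try (apply HR1; lia); try (apply Hdec; lia). }
  assert (Hsum := sum_bound (fun n => Cmod (c n - c (S n))%C) Rs ar (1 + q) m ltac:(lra) Hterm
     ltac:(intros; apply HR1; lia) Hdec m).
  replace (m + m)%nat with (2 * m)%nat in Hsum by lia.
  eapply Rle_trans. exact Hsum.
  destruct Ham as [Ham _].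
  assert (h1 := Hnn (S (2 * m)) ltac:(lia)).
  assert (h2 := mono' Rs HR1 (2 * m) (S (2 * m)) ltac:(lia) ltac:(lia)).
  assert (h3 := mono' Rs HR1 m (2 * m) ltac:(lia) ltac:(lia)).
  assert (h4 := HKb m Hm).
  assert (Hx : Rs m * ar m <= Rmax (Cmod (c m)) 0).
  { eapply Rle_trans; [|apply Rmax_l]. unfold ar.
    replace (Rs m * (fst (c m) / Rs m)) with (fst (c m)) by (field; lra).
    eapply Rle_trans. apply Rle_abs. apply re_le_Cmod. }
  assert (g1 : Rs (2 * m)%nat * (ar m - ar (S (2 * m))) <= Rs (S (2 * m)) * ar m)
    by (apply Rle_trans with (Rs (2 * m)%nat * ar m); [apply Rmult_le_compat_l|apply Rmult_le_compat_r]; lra).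
  assert (g2 : (Rs (S (2 * m)) - Rs m) * ar m <= Rs (S (2 * m)) * ar m)
    by (apply Rmult_le_compat_r; lra).
  assert (g3 : Rs (S (2 * m)) * ar m <= K * Rs m * ar m) by (apply Rmult_le_compat_r; lra).
  assert (g4 : (1 + q) * (Rs (2 * m)%nat * (ar m - ar (S (2 * m))) + (Rs (S (2 * m)) - Rs m) * ar m)
     <= (1 + q) * (2 * K * (Rs m * ar m))) by (apply Rmult_le_compat_l; lra).
  assert (g5 : 0 <= Rs m * ar m) by (apply Rmult_le_pos; lra).
  assert (g6 : 0 <= Rmax (Cmod (c m)) 0) by apply Rmax_r.
  assert (g7 : (2 * (1 + q) * K) * (Rs m * ar m) <= (2 * (1 + q) * K) * Rmax (Cmod (c m)) 0)
    by (apply Rmult_le_compat_l; [apply Rmult_le_pos|]; lra).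
  lra.
Qed.
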